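(* Let $R$ be a ring, $n$ a positive integer, and let $I$ be a weakly $n$-absorbing ideal of $R$ that is not an $n$-absorbing ideal. Then: (1) $I^{n+1}=\{0\}$; (2) $\sqrt{I}=\mathrm{Nil}(R)$; (3) if $M$ is an $R$-module with $IM=M$, then $M=\{0\}$.
   Context: All rings are commutative with $1\neq0$. A proper ideal $I$ of $R$ is $n$-absorbing if whenever $a_1\cdots a_{n+1}\in I$ with $a_1,\dots,a_{n+1}\in R$, there are $n$ of the $a_i$'s whose product is in $I$; it is weakly $n$-absorbing if this holds whenever $0\neq a_1\cdots a_{n+1}\in I$. $\mathrm{Nil}(R)$ is the ideal of nilpotent elements of $R$. *)

(* Defs.v *)
From mathcomp Require Import all_boot all_algebra.
Set Implicit Arguments. Unset Strict Implicit. Unset Printing Implicit Defensive.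
Import GRing.Theory.
Local Open Scope ring_scope.

Definition is_ideal (R : comNzRingType) (I : {pred R}) : Prop :=
  [/\ 0 \in I,
      (forall x y, x \in I -> y \in I -> x + y \in I) &
      (forall r x, x \in I -> r * x \in I)].

Definition proper_ideal (R : comNzRingType) (I : {pred R}) : Prop :=
  is_ideal I /\ 1 \notin I.

Definition n_absorbing (R : comNzRingType) (n : nat) (I : {pred R}) : Prop :=
  proper_ideal I /\
  forall a : 'I_n.+1 -> R, \prod_(i < n.+1) a i \in I ->
    exists j : 'I_n.+1, \prod_(i < n.+1 | i != j) a i \in I.

Definition weakly_n_absorbing (R : comNzRingType) (n : nat) (I : {pred R}) : Prop :=
  proper_ideal I /\
  forall a : 'I_n.+1 -> R, \prod_(i < n.+1) a i != 0 -> \prod_(i < n.+1) a i \in I ->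
    exists j : 'I_n.+1, \prod_(i < n.+1 | i != j) a i \in I.

Definition in_ideal_pow (R : comNzRingType) (I : {pred R}) (k : nat) (x : R) : Prop :=
  exists (m : nat) (a : 'I_m -> 'I_k -> R),
    (forall i j, a i j \in I) /\ x = \sum_(i < m) \prod_(j < k) a i j.

Definition in_radical (R : comNzRingType) (I : {pred R}) (x : R) : Prop :=
  exists m : nat, x ^+ m \in I.

Definition in_Nil (R : comNzRingType) (x : R) : Prop :=
  exists m : nat, x ^+ m = 0.

Definition in_IM (R : comNzRingType) (I : {pred R}) (M : lmodType R) (v : M) : Prop :=
  exists (m : nat) (r : 'I_m -> R) (w : 'I_m -> M),
    (forall i, r i \in I) /\ v = \sum_(i < m) r i *: w i.

(* Main.v *)
Require Import Defs.
From mathcomp Require Import all_boot all_algebra.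
From Stdlib Require Import Classical.
Set Implicit Arguments. Unset Strict Implicit. Unset Printing Implicit Defensive.
Import GRing.Theory.
Local Open Scope ring_scope.

Section S.
Variables (R : comNzRingType) (n : nat) (I : {pred R}).
Hypothesis hI : is_ideal I.
Hypothesis hw : forall a : 'I_n.+1 -> R, \prod_(i < n.+1) a i != 0 -> \prod_(i < n.+1) a i \in I ->
    exists j : 'I_n.+1, \prod_(i < n.+1 | i != j) a i \in I.

Lemma iD x y : x \in I -> y \in I -> x + y \in I.
Proof. by case: hI => _ H _; apply: H. Qed.
Lemma iMl r x : x \in I -> r * x \in I.
Proof. by case: hI => _ _ H; apply: H. Qed.
Lemma iMr r x : x \in I -> x * r \in I.
Proof. by rewrite mulrC; apply: iMl. Qed.
Lemma iN x : x \in I -> - x \in I.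
Proof. by move=> h; rewrite -mulN1r; apply: iMl. Qed.

Definition nz (a : 'I_n.+1 -> R) :=
  \prod_(i < n.+1) a i \in I /\ forall j, \prod_(i < n.+1 | i != j) a i \notin I.

Definition upd (a : 'I_n.+1 -> R) j v := fun i => if i == j then v else a i.

Lemma nz0 a : nz a -> \prod_(i < n.+1) a i = 0.
Proof.
case=> h1 h2; apply/eqP; apply/negPn/negP => hn.
by case: (hw hn h1) => j hj; move: (h2 j); rewrite hj.
Qed.

Lemma updQ a j v l : \prod_(i < n.+1 | (i != l) && (i != j)) upd a j v i =
   \prod_(i < n.+1 | (i != l) && (i != j)) a i.
Proof. by apply: eq_bigr => i /andP[_ /negbTE h]; rewrite /upd h. Qed.

Lemma updQ1 a j v : \prod_(i < n.+1 | i != j) upd a j v i =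
   \prod_(i < n.+1 | i != j) a i.
Proof. by apply: eq_bigr => i /negbTE h; rewrite /upd h. Qed.

Lemma updP a j v : \prod_(i < n.+1) upd a j v i = v * \prod_(i < n.+1 | i != j) a i.
Proof. by rewrite (bigD1 j) //= updQ1 /upd eqxx. Qed.

Lemma nz_upd a j y : nz a -> y \in I -> nz (upd a j (a j + y)).
Proof.
move=> [h1 h2] hy; split.
  rewrite updP mulrDl; rewrite (bigD1 j) //= in h1; apply: iD => //; exact: iMr.
move=> l; case: (eqVneq l j) => [->|hlj].
  by rewrite updQ1.
have hjl : j != l by rewrite eq_sym.
apply/negP => hin; move: (h2 l); rewrite (bigD1 j hjl) /=.
move: hin; rewrite (bigD1 j hjl) /= updQ /upd eqxx mulrDl => hin.
have := iD hin (iN (iMr (\prod_(i < n.+1 | (i != l) && (i != j)) a i) hy)).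
by rewrite addrK => ->.
Qed.

Lemma nz_zero a j y : nz a -> y \in I -> \prod_(i < n.+1) upd a j y i = 0.
Proof.
move=> ha hy; have := nz0 (nz_upd j ha hy).
rewrite !updP mulrDl.
have := nz0 ha; rewrite (bigD1 j) //= => ->.
by rewrite add0r.
Qed.

Lemma main_prod (x : 'I_n.+1 -> R) : (forall i, x i \in I) ->
  forall k, (k <= n.+1)%N -> forall a, nz a ->
  \prod_(i < n.+1) (if (i < k)%N then x i else a i) = 0.
Proof.
move=> hx; elim=> [|k IH] hk a ha.
  by rewrite -(nz0 ha); apply: eq_bigr => i _.
have hk' : (k < n.+1)%N by [].
pose j := Ordinal hk'.
have h1 := IH (ltnW hk) _ (nz_upd j ha (hx j)).
have h2 := IH (ltnW hk) _ ha.
rewrite (bigD1 j) //= in h1; rewrite (bigD1 j) //= in h2; rewrite (bigD1 j) //=.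
rewrite /upd eqxx /= ltnn in h1 h2; rewrite ltnSn.
have E : \prod_(i < n.+1 | i != j) (if (i < k)%N then x i else if i == j then a j + x j else a i)
   = \prod_(i < n.+1 | i != j) (if (i < k)%N then x i else a i).
  by apply: eq_bigr => i /negbTE ->.
have E2 : \prod_(i < n.+1 | i != j) (if (i < k.+1)%N then x i else a i)
   = \prod_(i < n.+1 | i != j) (if (i < k)%N then x i else a i).
  apply: eq_bigr => i hij; rewrite ltnS leq_eqVlt.
  suff -> : (i == k :> nat) = false by [].
  by apply/negbTE; move: hij; apply: contra => /eqP h; apply/eqP/val_inj.
rewrite E2; rewrite E mulrDl h2 add0r in h1; exact: h1.
Qed.

End S.

Inductive spanP (R : comNzRingType) (I : {pred R}) (M : lmodType R) (k : nat) : M -> Prop :=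
| sp0 : spanP I k 0
| spD v w : spanP I k v -> spanP I k w -> spanP I k (v + w)
| spG (a : 'I_k -> R) w : (forall j, a j \in I) -> spanP I k ((\prod_(j < k) a j) *: w).

Theorem mainTheorem5 (R : comNzRingType) (n : nat) (I : {pred R}) :
  (0 < n)%N ->
  weakly_n_absorbing n I -> ~ n_absorbing n I ->
  [/\ (forall x : R, in_ideal_pow I n.+1 x -> x = 0),
      (forall x : R, in_radical I x <-> in_Nil x) &
      (forall M : lmodType R, (forall v : M, in_IM I v) -> forall v : M, v = 0)].
Proof.
move=> _ [hp hw] hna.
have hI : is_ideal I by case: hp.
have [a ha] : exists a : 'I_n.+1 -> R, nz I a.
  apply: NNPP => hne; apply: hna; split => // a ha.
  apply: NNPP => hnj; apply: hne; exists a; split => // j.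
  by apply/negP => hj; apply: hnj; exists j.
have P1 : forall x : 'I_n.+1 -> R, (forall i, x i \in I) -> \prod_(i < n.+1) x i = 0.
  move=> x hx; rewrite -(main_prod hI hw hx (leqnn n.+1) ha).
  by apply: eq_bigr => i _; rewrite ltn_ord.
have T1 : forall x : R, in_ideal_pow I n.+1 x -> x = 0.
  move=> x [m [b [hb ->]]]; apply: big1 => i _; exact: P1.
split => //.
  move=> x; split.
    case=> m hm; exists (m * n.+1)%N; rewrite exprM; apply: T1.
    exists 1%N, (fun _ _ => x ^+ m); split => //.
    by rewrite big_ord1 prodr_const card_ord.
  by case=> m hm; exists m; rewrite hm; case: hI.
move=> M hM.
have base : forall v : M, spanP I 1 v.
  move=> v; case: (hM v) => m [r [w [hr ->]]].
  apply: (big_ind (spanP I 1)); [exact: sp0 | exact: spD |] => i _.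
  have := @spG R I M 1 (fun _ => r i) (w i) (fun _ => hr i).
  by rewrite big_ord1.
have step : forall k (v : M), spanP I k v -> spanP I k.+1 v.
  move=> k v; elim => [|v1 v2 _ h1 _ h2|b w hb]; [exact: sp0 | exact: spD |].
  case: (hM w) => m [r [w' [hr ->]]].
  rewrite scaler_sumr; apply: (big_ind (spanP I k.+1)); [exact: sp0 | exact: spD |] => i _.
  rewrite scalerA.
  pose b' := fun j : 'I_k.+1 => match unlift ord0 j with Some j' => b j' | None => r i end.
  have -> : (\prod_(j < k) b j) * r i = \prod_(j < k.+1) b' j.
    rewrite big_ord_recl /b' unlift_none mulrC; congr (_ * _).
    by apply: eq_bigr => j _; rewrite liftK.
  apply: spG => j; rewrite /b'; case: (unlift ord0 j) => //.
have all : forall k (v : M), spanP I k.+1 v.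
  by elim=> [|k IH] v; [exact: base | apply: step].
move=> v; have := all n v; elim => [//|v1 v2 _ -> _ ->|b w hb]; first by rewrite addr0.
by rewrite P1 // scale0r.
Qed.
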